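(* (i) $\mathcal{SC}_\alpha\subset\mathcal{L}^{1/\beta}$ for all $0<\alpha<\beta\le1$. (ii) If $X\in\mathcal{SC}_\alpha$ for some $0<\alpha<1$ and $\lim_{x\to\infty}Q_X(x)/x^\alpha=0$, then $X^\alpha\in\mathcal{L}$.
   Context: For a nonnegative r.v. $X$, $Q_X(x)=-\log\mathbb{P}(X>x)$. $X\in\mathcal{SC}_\alpha$ ($0<\alpha<1$) if (i) $Q_X$ is eventually concave, (ii) $Q_X(x)/\log x\to\infty$, and (iii) there is $x_0>0$ such that $Q_X(x)/x^\alpha$ is nonincreasing on $[x_0,\infty)$. Class $\mathcal{L}$: nonnegative $Z$ with $\mathbb{P}(Z>x)>0$ for all $x$ and $\mathbb{P}(Z>x+y)/\mathbb{P}(Z>x)\to1$ for some (all) $y>0$; $X\in\mathcal{L}^p$ ($p\ge1$) means $X^{1/p}\in\mathcal{L}$. *)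

(* Defs.v *)
From HB Require Import structures.
From mathcomp Require Import all_boot all_order all_algebra.
From mathcomp Require Import all_classical all_reals all_analysis.
Set Implicit Arguments. Unset Strict Implicit. Unset Printing Implicit Defensive.
Import Order.TTheory GRing.Theory Num.Theory.
Import numFieldNormedType.Exports.
Local Open Scope classical_set_scope.
Local Open Scope ring_scope.

Section Defs.
Context (d : measure_display) (T : measurableType d) (R : realType)
        (P : probability T R).

Definition tail (Z : T -> R) (x : R) : R := fine (P [set t | x < Z t]).

Definition Qf (Z : T -> R) (x : R) : R := - ln (tail Z x).

Definition eventually_concave (f : R -> R) : Prop :=
  exists a : R, forall x y t : R, a <= x -> a <= y -> 0 <= t -> t <= 1 ->
    (1 - t) * f x + t * f y <= f ((1 - t) * x + t * y).

Definition SC (alpha : R) (X : T -> R) : Prop :=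
  (forall t, 0 <= X t) /\
  (forall x, 0 < tail X x) /\
  eventually_concave (Qf X) /\
  ((fun x => Qf X x / ln x) x @[x --> +oo] --> +oo) /\
  (exists x0 : R, 0 < x0 /\
     forall x y : R, x0 <= x -> x <= y ->
       Qf X y / y `^ alpha <= Qf X x / x `^ alpha).

Definition Lclass (Z : T -> R) : Prop :=
  (forall t, 0 <= Z t) /\
  (forall x, 0 < tail Z x) /\
  (forall y : R, 0 < y ->
     (fun x => tail Z (x + y) / tail Z x) x @[x --> +oo] --> (1 : R)).

Definition Lp (p : R) (X : T -> R) : Prop :=
  Lclass (fun t => X t `^ (p^-1)).

End Defs.

(* Main.v *)
Require Import Defs.
From HB Require Import structures.
From mathcomp Require Import all_boot all_order all_algebra.
From mathcomp Require Import all_classical all_reals all_analysis.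
From mathcomp Require Import ring lra.
Import Order.TTheory GRing.Theory Num.Theory.
Import numFieldNormedType.Exports.
Local Open Scope classical_set_scope.
Local Open Scope ring_scope.
Section Key.
Variable R : realType.

Lemma three_slope (q : R -> R) (a b u v : R) :
  (forall x y t : R, a <= x -> a <= y -> 0 <= t -> t <= 1 ->
    (1 - t) * q x + t * q y <= q ((1 - t) * x + t * y)) ->
  a <= b -> b < u -> u <= v ->
  (u - b) * (q v - q u) <= (v - u) * (q u - q b).
Proof.
move=> cc ab bu uv.
have vb : 0 < v - b by lra.
set t := (u - b) / (v - b).
have t0 : 0 <= t by rewrite /t divr_ge0 //; lra.
have t1 : t <= 1 by rewrite /t ler_pdivrMr //; lra.
have := cc b v t ab ltac:(lra) t0 t1.
have -> : (1 - t) * b + t * v = u.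
  rewrite /t; field; lra.
move=> h.
have h2 : (u - b) * (q v - q b) <= (v - b) * (q u - q b).
  have -> : u - b = t * (v - b) by rewrite /t divfK //; lra.
  have : 0 <= (v - b) * (q u - q b - t * (q v - q b)) by apply: mulr_ge0; lra.
  lra.
lra.
Qed.

Lemma pow_bound (p s : R) : 1 <= p -> 0 <= s -> s <= 1 ->
  (1 + s) `^ p <= 1 + p * s * expR p.
Proof.
move=> p1 s0 s1.
have -> : (1 + s) `^ p = expR (p * ln (1 + s)).
  by rewrite /powR gt_eqF //; lra.
have l1 : ln (1 + s) <= s by apply: le_ln1Dx; lra.
have e1 : expR (p * ln (1 + s)) <= expR (p * s).
  by rewrite ler_expR ler_wpM2l //; lra.
set w := expR (p * s).
have w0 : 0 < w := expR_gt0 _.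
have e2 : 1 - p * s <= w^-1 by rewrite -expRN; have := expR_ge1Dx (- (p * s)); lra.
have e3 : w * (1 - p * s) <= 1.
  have := ler_wpM2l (ltW w0) e2; rewrite mulfV ?gt_eqF //.
have e4 : w <= expR p.
  rewrite /w ler_expR; have : p * s <= p * 1 by rewrite ler_wpM2l //; lra.
  lra.
have ps0 : 0 <= p * s by apply: mulr_ge0; lra.
have : p * s * w <= p * s * expR p by apply: ler_wpM2l.
rewrite -/w in e1. lra.
Qed.

Lemma key (q : R -> R) (a beta y : R) :
  0 < beta -> beta <= 1 -> 0 < y ->
  (forall x, 0 <= q x) -> (forall x z, x <= z -> q x <= q z) ->
  (forall x y t : R, a <= x -> a <= y -> 0 <= t -> t <= 1 ->
    (1 - t) * q x + t * q y <= q ((1 - t) * x + t * y)) ->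
  (forall e, 0 < e -> exists M, forall u, M <= u -> q u <= e * u `^ beta) ->
  forall e, 0 < e -> exists M, forall x, M <= x ->
    q ((x + y) `^ beta^-1) - q (x `^ beta^-1) <= e.
Proof.
move=> b0 b1 y0 q0 qmon cc hq e e0.
set p := beta^-1.
have p1 : 1 <= p by rewrite /p invf_ge1 //.
set b := Num.max a 1.
have ab : a <= b by rewrite /b le_max lexx.
have b1' : 1 <= b by rewrite /b le_max lexx orbT.
set K := 2 * p * y * expR p.
have K0 : 0 < K by rewrite /K !mulr_gt0 ?expR_gt0 //; lra.
have [M0 hM0] := hq (e / K) (divr_gt0 e0 K0).
set c := Num.max M0 (2 * b).
have c0 : 0 < c by rewrite /c lt_max; apply/orP; right; lra.
have cM0 : M0 <= c by rewrite /c le_max lexx.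
have c2b : 2 * b <= c by rewrite /c le_max lexx orbT.
exists (Num.max (c `^ beta) y) => x.
rewrite ge_max => /andP[cx yx].
have x0 : 0 < x by lra.
set u := x `^ p; set v := (x + y) `^ p.
have bp : beta * p = 1 by rewrite /p mulfV ?gt_eqF.
have uc : c <= u.
  have -> : c = (c `^ beta) `^ p by rewrite -powRrM bp powRr1 // ltW.
  apply: ge0_ler_powR => //; rewrite ?nnegrE ?powR_ge0 //; lra.
have uv : u <= v.
  apply: ge0_ler_powR; rewrite ?nnegrE; lra.
have ux : u `^ beta = x by rewrite /u -powRrM mulrC bp powRr1 // ltW.
have qu : q u <= e / K * x by rewrite -ux; apply: hM0; lra.
set s := y / x.
have s0 : 0 <= s by rewrite /s divr_ge0 //; lra.
have s1 : s <= 1 by rewrite /s ler_pdivrMr // mul1r.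
have sx : s * x = y by rewrite /s divfK // gt_eqF.
have vE : v = u * (1 + s) `^ p.
  rewrite /v /u -powRM; [|lra|lra].
  congr (_ `^ _); rewrite mulrDr mulr1 mulrC sx //.
have pb := @pow_bound p s p1 s0 s1.
have u0 : 0 < u by rewrite /u powR_gt0.
have vu : v - u <= u * (p * s * expR p).
  rewrite vE; have := ler_wpM2l (ltW u0) pb; lra.
have ts := @three_slope q a b u v cc ab (ltac:(lra) : b < u) uv.
have D0 : 0 <= q v - q u by have := qmon _ _ uv; lra.
have h1 : (v - u) * (q u - q b) <= (v - u) * q u.
  by apply: ler_wpM2l; [lra | have := q0 b; lra].
have h2 : (v - u) * q u <= u * (p * s * expR p) * (e / K * x).
  apply: ler_pM; [lra | exact: q0 | exact: vu | exact: qu].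
have h3 : u * (p * s * expR p) * (e / K * x) = u * e / 2.
  rewrite /K -sx; field.
  have sp : 0 < s by rewrite /s divr_gt0.
  by rewrite !gt_eqF ?expR_gt0 //; lra.
have h4 : 0 <= (u - b - u / 2) * (q v - q u) by apply: mulr_ge0 => //; lra.
have h5 : 0 <= u * (e - (q v - q u)) by lra.
have := h5; rewrite pmulr_rge0 //; lra.
Qed.
End Key.
Section N.
Variable R : realType.
Lemma near_of (P : R -> Prop) (M : R) : (forall x, M <= x -> P x) -> \forall x \near +oo, P x.
Proof. move=> h; exists M; split; first exact: num_real. by move=> x /ltW; apply: h. Qed.
Lemma of_near (P : R -> Prop) : (\forall x \near +oo, P x) -> exists M, forall x, M <= x -> P x.
Proof. case=> M [_ h]; exists (M + 1) => x hx; apply: h; lra. Qed.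
End N.

Section Prob.
Context (d : measure_display) (T : measurableType d) (R : realType)
        (P : probability T R).

Lemma tail_meas (X : {RV P >-> R}) x : measurable [set t | x < X t].
Proof.
rewrite -preimage_itvoy -[X @^-1` _]setTI.
by apply: (measurable_funPT X) => //; exact: measurable_itv.
Qed.

Lemma tail_fin (X : {RV P >-> R}) x : P [set t | x < X t] = (tail P X x)%:E.
Proof. by rewrite /tail fineK // fin_num_measure //; exact: tail_meas. Qed.

Lemma tail_le1 (X : {RV P >-> R}) x : tail P X x <= 1.
Proof. by rewrite -lee_fin -tail_fin probability_le1 //; exact: tail_meas. Qed.

Lemma tail_mono (X : {RV P >-> R}) x y : x <= y -> tail P X y <= tail P X x.
Proof.
move=> xy; rewrite -lee_fin -!tail_fin; apply: le_measure; rewrite ?inE; try exact: tail_meas.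
by move=> t /= yt; exact: le_lt_trans xy yt.
Qed.

Lemma tailZ_pos (X : T -> R) beta : 0 < beta -> (forall t, 0 <= X t) ->
  forall x, 0 <= x ->
  tail P (fun t => X t `^ beta) x = tail P X (x `^ beta^-1).
Proof.
move=> b0 X0 x x0; rewrite /tail; congr (fine (P _)).
have p0 : 0 < beta^-1 by rewrite invr_gt0.
apply/seteqP; split => t /= h.
- have := gt0_ltr_powR p0 _ _ h; rewrite -powRrM mulfV ?gt_eqF // powRr1 //.
  by apply; rewrite nnegrE ?powR_ge0.
- have := gt0_ltr_powR b0 _ _ h; rewrite -powRrM mulVf ?gt_eqF // powRr1 //.
  by apply; rewrite nnegrE ?powR_ge0.
Qed.

Lemma tailZ_neg (X : T -> R) beta x : x < 0 ->
  tail P (fun t => X t `^ beta) x = 1.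
Proof.
move=> x0; rewrite /tail.
have -> : [set t | x < X t `^ beta] = setT.
  by apply/seteqP; split => t //= _; exact: lt_le_trans x0 (powR_ge0 _ _).
by rewrite probability_setT.
Qed.

Lemma main_L (X : {RV P >-> R}) beta : 0 < beta -> beta <= 1 ->
  (forall t, 0 <= X t) -> (forall x, 0 < tail P X x) ->
  eventually_concave (Qf P X) ->
  (forall e, 0 < e -> exists M, forall u, M <= u -> Qf P X u <= e * u `^ beta) ->
  Lclass P (fun t => X t `^ beta).
Proof.
move=> b0 b1 X0 tpos [a cc] hg.
have q0 : forall x, 0 <= Qf P X x.
  by move=> x; rewrite /Qf oppr_ge0 ln_le0 // tail_le1.
have qmon : forall x z, x <= z -> Qf P X x <= Qf P X z.
  move=> x z xz; rewrite /Qf lerN2 ler_ln ?posrE ?tpos //; exact: tail_mono.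
split; first by move=> t; exact: powR_ge0.
split.
  move=> x; have [x0|x0] := ltP x 0; first by rewrite tailZ_neg.
  by rewrite tailZ_pos.
move=> y y0; apply/cvgrPdist_le => e e0.
have [M hM] := @key R (Qf P X) a beta y b0 b1 y0 q0 qmon cc hg e e0.
apply: (@near_of _ _ (Num.max M 0)) => x; rewrite ge_max => /andP[Mx x0].
rewrite tailZ_pos // ?tailZ_pos //; last lra.
have := hM x Mx; rewrite /Qf.
set A := tail P X (x `^ _); set B := tail P X ((x+y) `^ _).
have A0 : 0 < A by apply: tpos.
have B0 : 0 < B by apply: tpos.
have BA : B <= A.
  apply: tail_mono; apply: ge0_ler_powR; rewrite ?nnegrE ?invr_ge0; lra.
move=> hAB.
set r := B / A.
have r0 : 0 < r by rewrite divr_gt0.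
have r1 : r <= 1 by rewrite ler_pdivrMr // mul1r.
have lr : ln r = ln B - ln A by rewrite /r ln_div ?posrE.
have lr2 : ln r <= r - 1.
  have := @le_ln1Dx R (r - 1) ltac:(lra); rewrite [1 + _]addrC subrK //.
rewrite ger0_norm; lra.
Qed.
End Prob.

Theorem lemmaA6 (d : measure_display) (T : measurableType d) (R : realType)
    (P : probability T R) :
  (forall alpha beta : R, 0 < alpha -> alpha < beta -> beta <= 1 ->
     forall X : {RV P >-> R}, SC P alpha X -> Lp P (beta^-1) X) /\
  (forall alpha : R, 0 < alpha -> alpha < 1 ->
     forall X : {RV P >-> R}, SC P alpha X ->
       (fun x => Qf P X x / x `^ alpha) x @[x --> +oo] --> (0 : R) ->
       Lclass P (fun t => X t `^ alpha)).
Proof.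
split.
- move=> alpha beta a0 ab b1 X [X0 [tpos [cc [_ [x0 [x00 hmon]]]]]].
  rewrite /Lp invrK; apply: main_L => //; first lra.
  move=> e e0.
  set C := Qf P X x0 / x0 `^ alpha.
  have C0 : 0 <= C.
    rewrite /C divr_ge0 ?powR_ge0 //.
    by rewrite /Qf oppr_ge0 ln_le0 // tail_le1.
  set g := beta - alpha.
  have g0 : 0 < g by rewrite /g; lra.
  exists (Num.max x0 ((C / e) `^ g^-1)) => u; rewrite ge_max => /andP[xu cu].
  have u0 : 0 < u by lra.
  have h1 := hmon x0 u (lexx _) xu.
  have ua0 : 0 < u `^ alpha by rewrite powR_gt0.
  have h2 : Qf P X u <= C * u `^ alpha by rewrite -ler_pdivrMr.
  have Ce0 : 0 <= C / e by rewrite divr_ge0 //; lra.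
  have h3 : C / e <= u `^ g.
    have -> : C / e = ((C / e) `^ g^-1) `^ g.
      by rewrite -powRrM mulVf ?gt_eqF // powRr1.
    apply: ge0_ler_powR; rewrite ?nnegrE ?powR_ge0 //; lra.
  have h4 : C <= e * u `^ g by rewrite mulrC -ler_pdivrMr.
  have h5 : u `^ beta = u `^ g * u `^ alpha.
    rewrite -powRD; last by apply/implyP => _; rewrite gt_eqF.
    by rewrite /g subrK.
  rewrite h5 mulrA; apply: (le_trans h2); apply: ler_wpM2r => //; exact: ltW.
- move=> alpha a0 a1 X [X0 [tpos [cc _]]] hlim.
  apply: main_L => //; first lra.
  move=> e e0.
  move/cvgrPdist_le: hlim => /(_ e e0) /of_near [M hM].
  exists (Num.max M 1) => u; rewrite ge_max => /andP[Mu u1].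
  have := hM u Mu; rewrite sub0r normrN => h.
  have h' := le_trans (ler_norm _) h.
  have ua0 : 0 < u `^ alpha by rewrite powR_gt0 //; lra.
  by move: h'; rewrite ler_pdivrMr.
Qed.
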